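(* Let $n\ge 1$ and let $L_1,L_2,\underline{b}$ be positive constants. Assume that $(k_p,k_d)\in(0,\infty)\times(0,\infty)$ satisfies $k_p^2>\bar k$ and $k_d^2>k_p/\underline{b}+\bar k$, where $\bar k=(L_1+L_2)(k_p+k_d)/\underline{b}$. Then the $2n\times 2n$ matrix $$P=\begin{bmatrix} 2k_pk_d\underline{b}I_n & k_pI_n\\ k_pI_n & k_dI_n\end{bmatrix}$$ is positive definite. Moreover, for $$A=\begin{bmatrix}0_n & I_n\\ a-k_p\theta & b-k_d\theta\end{bmatrix},$$ where $a,b,\theta$ are $n\times n$ constant matrices satisfying $\|a\|\le L_1$, $\|b\|\le L_2$ and $(\theta+\theta^{\mathsf{T}})/2\ge \underline{b}I_n>0$, there exists $\beta>0$ depending only on $(k_p,k_d,L_1,L_2,\underline{b})$ such that $PA+A^{\mathsf{T}}P\le -\beta I_{2n}$ for all such $a,b,\theta$.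
   Context: Here $I_n$ and $0_n$ are the $n\times n$ identity and zero matrices, $\|\cdot\|$ is the induced Euclidean (operator) norm of a matrix, and for symmetric matrices $S_1\ge S_2$ (resp. $S_1>S_2$) means $S_1-S_2$ is positive semi-definite (resp. positive definite). *)

(* Defs.v *)
From HB Require Import structures.
From mathcomp Require Import all_boot all_order all_algebra.
From mathcomp Require Import boolp classical_sets reals.
Set Implicit Arguments. Unset Strict Implicit. Unset Printing Implicit Defensive.
Import Order.TTheory GRing.Theory Num.Theory.
Local Open Scope ring_scope.
Local Open Scope classical_set_scope.

Definition vnorm (R : realType) (m : nat) (x : 'cV[R]_m) : R :=
  Num.sqrt (\sum_(i < m) x i 0 ^+ 2).

Definition opnorm (R : realType) (m : nat) (A : 'M[R]_m) : R :=
  sup [set vnorm (A *m x) | x in [set x : 'cV[R]_m | vnorm x <= 1]].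

Definition qform (R : realType) (m : nat) (S : 'M[R]_m) (x : 'cV[R]_m) : R :=
  (x^T *m S *m x) 0 0.

Definition psd (R : realType) (m : nat) (S : 'M[R]_m) : Prop :=
  forall x : 'cV[R]_m, 0 <= qform S x.

Definition posdef (R : realType) (m : nat) (S : 'M[R]_m) : Prop :=
  forall x : 'cV[R]_m, x != 0 -> 0 < qform S x.

Definition mxle (R : realType) (m : nat) (S1 S2 : 'M[R]_m) : Prop :=
  psd (S2 - S1).

Definition kbar (R : realType) (L1 L2 bl kp kd : R) : R :=
  (L1 + L2) * (kp + kd) / bl.

Definition Pmx (R : realType) (n : nat) (bl kp kd : R) : 'M[R]_(n + n) :=
  block_mx ((2 * kp * kd * bl) *: (1%:M : 'M[R]_n)) (kp *: 1%:M)
           (kp *: 1%:M) (kd *: 1%:M).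

Definition Amx (R : realType) (n : nat) (kp kd : R) (a b theta : 'M[R]_n)
  : 'M[R]_(n + n) :=
  block_mx 0 1%:M (a - kp *: theta) (b - kd *: theta).

(* Main.v *)
Require Import Defs.
From HB Require Import structures.
From mathcomp Require Import all_boot all_order all_algebra.
From mathcomp Require Import boolp classical_sets reals.
From mathcomp Require Import ring lra.
Import Order.TTheory GRing.Theory Num.Theory.
Set Implicit Arguments. Unset Strict Implicit.
Local Open Scope ring_scope.

Section Dot.
Variable R : realType.

Lemma msq (x : R) : 0 <= x * x. Proof. by rewrite -expr2 sqr_ge0. Qed.

Definition dot {m : nat} (p q : 'cV[R]_m) : R := (p^T *m q) 0 0.

Lemma dotE m (p q : 'cV[R]_m) : dot p q = \sum_i p i 0 * q i 0.
Proof. by rewrite /dot mxE; apply: eq_bigr => i _; rewrite mxE. Qed.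

Lemma dotDr m (p q1 q2 : 'cV[R]_m) : dot p (q1 + q2) = dot p q1 + dot p q2.
Proof. by rewrite /dot mulmxDr mxE. Qed.
Lemma dotDl m (p1 p2 q : 'cV[R]_m) : dot (p1 + p2) q = dot p1 q + dot p2 q.
Proof. by rewrite /dot linearD /= mulmxDl mxE. Qed.
Lemma dotZr m c (p q : 'cV[R]_m) : dot p (c *: q) = c * dot p q.
Proof. by rewrite /dot -scalemxAr mxE. Qed.
Lemma dotZl m c (p q : 'cV[R]_m) : dot (c *: p) q = c * dot p q.
Proof. by rewrite /dot linearZ /= -scalemxAl mxE. Qed.
Lemma dotC m (p q : 'cV[R]_m) : dot p q = dot q p.
Proof. rewrite !dotE; apply: eq_bigr => i _; exact: mulrC. Qed.
Lemma dotNr m (p q : 'cV[R]_m) : dot p (- q) = - dot p q.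
Proof. by rewrite -scaleN1r dotZr mulN1r. Qed.
Lemma dotNl m (p q : 'cV[R]_m) : dot (- p) q = - dot p q.
Proof. by rewrite dotC dotNr dotC. Qed.
Lemma dotBr m (p q1 q2 : 'cV[R]_m) : dot p (q1 - q2) = dot p q1 - dot p q2.
Proof. by rewrite dotDr dotNr. Qed.
Lemma dotBl m (p1 p2 q : 'cV[R]_m) : dot (p1 - p2) q = dot p1 q - dot p2 q.
Proof. by rewrite dotDl dotNl. Qed.
Lemma dot_ge0 m (p : 'cV[R]_m) : 0 <= dot p p.
Proof. rewrite dotE; apply: sumr_ge0 => i _; exact: msq. Qed.
Lemma dot_eq0 m (p : 'cV[R]_m) : dot p p = 0 -> p = 0.
Proof.
rewrite dotE => H; apply/matrixP => i j; rewrite (ord1 j) mxE.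
have := psumr_eq0P (fun i _ => msq (p i 0)) H (i:=i) isT.
by move/eqP; rewrite mulf_eq0 orbb => /eqP.
Qed.
Lemma dot0r m (p : 'cV[R]_m) : dot p 0 = 0.
Proof. by rewrite /dot mulmx0 mxE. Qed.
Lemma dot_col m1 m2 (u u' : 'cV[R]_m1) (v v' : 'cV[R]_m2) :
  dot (col_mx u v) (col_mx u' v') = dot u u' + dot v v'.
Proof. by rewrite /dot tr_col_mx mul_row_col mxE. Qed.
Lemma qformE m (S : 'M[R]_m) x : qform S x = dot x (S *m x).
Proof. by rewrite /qform /dot mulmxA. Qed.
Lemma qformT m (S : 'M[R]_m) x : qform S^T x = qform S x.
Proof.
rewrite /qform.
have -> : x^T *m S *m x = (x^T *m S^T *m x)^T by rewrite !trmx_mul !trmxK mulmxA.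
by rewrite [RHS]mxE.
Qed.
Lemma qformD m (S T : 'M[R]_m) x : qform (S + T) x = qform S x + qform T x.
Proof. by rewrite /qform mulmxDr mulmxDl mxE. Qed.
Lemma qformN m (S : 'M[R]_m) x : qform (- S) x = - qform S x.
Proof. by rewrite /qform mulmxN mulNmx mxE. Qed.
Lemma qformZ m c (S : 'M[R]_m) x : qform (c *: S) x = c * qform S x.
Proof. by rewrite /qform -scalemxAr -scalemxAl mxE. Qed.
Lemma qform1 m x : qform (1%:M : 'M[R]_m) x = dot x x.
Proof. by rewrite qformE mul1mx. Qed.
Lemma dotTr m (S : 'M[R]_m) p q : dot p (S^T *m q) = dot (S *m p) q.
Proof. by rewrite /dot mulmxA -trmx_mul. Qed.

Lemma vnorm2 m (x : 'cV[R]_m) : vnorm x ^+ 2 = dot x x.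
Proof.
rewrite /vnorm sqr_sqrtr; last by apply: sumr_ge0 => i _; exact: sqr_ge0.
by rewrite dotE; apply: eq_bigr => i _; rewrite expr2.
Qed.
End Dot.
Section Op.
Variable R : realType.

Lemma coord_le1 m (x : 'cV[R]_m) j : vnorm x <= 1 -> `|x j 0| <= 1.
Proof.
move=> h.
have h0 : 0 <= vnorm x by rewrite /vnorm sqrtr_ge0.
have h1 : dot x x <= 1 by rewrite -vnorm2; nra.
have h2 : x j 0 ^+ 2 <= dot x x.
  rewrite dotE (bigD1 j) //= expr2 lerDl; apply: sumr_ge0 => i _; exact: msq.
have h3 : `|x j 0| ^+ 2 = x j 0 ^+ 2 by rewrite real_normK // num_real.
have h4 := normr_ge0 (x j 0).
nra.
Qed.

Lemma opnorm_le m (a : 'M[R]_m) L : opnorm a <= L ->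
  forall x, vnorm x <= 1 -> vnorm (a *m x) <= L.
Proof.
move=> hL x hx; apply: le_trans hL; apply: sup_upper_bound; last by exists x.
split; first by exists (vnorm (a *m 0)); exists 0 => //=; rewrite /vnorm big1 ?sqrtr0 // => i _; rewrite mxE expr0n.
exists (Num.sqrt (\sum_i (\sum_j `|a i j|) ^+ 2)) => _ [y hy <-].
rewrite /vnorm ler_sqrt; last by apply: sumr_ge0 => i _; exact: sqr_ge0.
apply: ler_sum => i _.
have hb : `|(a *m y) i 0| <= \sum_j `|a i j|.
  rewrite mxE; apply: le_trans (ler_norm_sum _ _ _) _; apply: ler_sum => j _.
  rewrite normrM; apply: ler_piMr => //; exact: coord_le1.
have h3 : `|(a *m y) i 0| ^+ 2 = (a *m y) i 0 ^+ 2 by rewrite real_normK // num_real.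
have h4 := normr_ge0 ((a *m y) i 0).
nra.
Qed.

Lemma opnorm_sq m (a : 'M[R]_m) L : 0 < L -> opnorm a <= L ->
  forall v, dot (a *m v) (a *m v) <= L ^+ 2 * dot v v.
Proof.
move=> L0 hL v.
have [v0|] := eqVneq (dot v v) 0.
  by rewrite (dot_eq0 v0) mulmx0 !dot0r mulr0.
move=> vn0.
have hv := dot_ge0 v.
have N0 : 0 < vnorm v by rewrite /vnorm sqrtr_gt0 -dotE lt_def vn0.
set N := vnorm v in N0.
have hN : N ^+ 2 = dot v v by rewrite vnorm2.
have hx : vnorm (N^-1 *: v) <= 1.
  have h : vnorm (N^-1 *: v) ^+ 2 = 1.
    by rewrite vnorm2 dotZl dotZr -hN mulrA -expr2 exprVn mulVf // expf_neq0 // gt_eqF.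
  have h0 : 0 <= vnorm (N^-1 *: v) by rewrite /vnorm sqrtr_ge0.
  nra.
have := opnorm_le hL hx.
rewrite -scalemxAr => h.
have h0 : 0 <= vnorm (N^-1 *: (a *m v)) by rewrite /vnorm sqrtr_ge0.
have h2 : vnorm (N^-1 *: (a *m v)) ^+ 2 <= L ^+ 2 by nra.
move: h2; rewrite vnorm2 dotZl dotZr mulrA -expr2 => h2.
rewrite -hN.
have : dot (a *m v) (a *m v) = N ^+ 2 * (N^-1 ^+ 2 * dot (a *m v) (a *m v)).
  by rewrite mulrA -exprMn divff ?gt_eqF // expr1n mul1r.
move=> ->; rewrite [X in _ <= X]mulrC; apply: ler_pM => //; first exact: sqr_ge0.
by rewrite mulr_ge0 ?sqr_ge0 ?dot_ge0.
Qed.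

Lemma opnorm_dot m (a : 'M[R]_m) L : 0 < L -> opnorm a <= L ->
  forall u v, 2 * dot u (a *m v) <= L * (dot u u + dot v v).
Proof.
move=> L0 hL u v.
have h1 := opnorm_sq L0 hL v.
have h2 := dot_ge0 (L *: u - a *m v).
rewrite !(dotBl, dotBr, dotZl, dotZr) (dotC (a *m v) u) in h2.
nra.
Qed.
End Op.
Lemma Pmx_col (R : realType) n (bl kp kd : R) (u v : 'cV[R]_n) :
  Pmx n bl kp kd *m col_mx u v =
  col_mx ((2 * kp * kd * bl) *: u + kp *: v) (kp *: u + kd *: v).
Proof. by rewrite /Pmx mul_block_col !scalemx1 !mul_scalar_mx. Qed.

Lemma Amx_col (R : realType) n (kp kd : R) a b theta (u v : 'cV[R]_n) :
  Amx kp kd a b theta *m col_mx u v =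
  col_mx v ((a *m u - kp *: (theta *m u)) + (b *m v - kd *: (theta *m v))).
Proof. by rewrite /Amx mul_block_col mul0mx mul1mx add0r !mulmxBl -!scalemxAl. Qed.

Lemma part1 (R : realType) (bl kp kd : R) n : 0 < bl -> 0 < kp -> 0 < kd ->
  kp / bl < kd ^+ 2 -> posdef (Pmx n bl kp kd).
Proof.
move=> hb hp hd hk x; rewrite -(vsubmxK x).
set u := usubmx x; set v := dsubmx x => x0.
have hpos : 0 < dot u u + dot v v.
  rewrite -dot_col lt_def dot_ge0 andbT; apply/eqP => /dot_eq0 h; by rewrite h eqxx in x0.
rewrite qformE Pmx_col dot_col !(dotDr, dotZr) (dotC v u).
have hk2 : kp < kd ^+ 2 * bl.
  by move: hk; rewrite ltr_pdivrMr.
set c := 2 * kp * kd * bl.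
have W1 := dot_ge0 (kp *: u + kd *: v).
have W2 := dot_ge0 (c *: u + kp *: v).
rewrite !(dotDl, dotDr, dotZl, dotZr) (dotC v u) in W1 W2.
have hU := dot_ge0 u. have hV := dot_ge0 v.
move: W1 W2 hpos hU hV; set U := dot u u; set V := dot v v; set D := dot u v => W1 W2 hpos hU hV.
have hc : 0 < c * kd - kp ^+ 2.
  have -> : c * kd - kp ^+ 2 = kp * (2 * (kd ^+ 2 * bl) - kp) by rewrite /c; ring.
  apply: mulr_gt0 => //; lra.
have hc0 : 0 < c by rewrite /c !mulr_gt0.
have key : (kd + c) * (c * U + kp * D + (kp * D + kd * V)) =
  (kp * (kp * U + kd * D) + kd * (kp * D + kd * V)) +
  (c * (c * U + kp * D) + kp * (c * D + kp * V)) + (c * kd - kp ^+ 2) * (U + V).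
  ring.
have : 0 < (kd + c) * (c * U + kp * D + (kp * D + kd * V)).
  rewrite key; apply: ltr_wpDl; first lra. exact: mulr_gt0.
rewrite pmulr_rgt0 //; lra.
Qed.

Lemma part2 (R : realType) (L1 L2 bl kp kd beta : R) n (a b theta : 'M[R]_n) :
  0 < L1 -> 0 < L2 -> 0 < bl -> 0 < kp -> 0 < kd ->
  opnorm a <= L1 -> opnorm b <= L2 ->
  mxle (bl *: (1%:M : 'M[R]_n)) (2^-1 *: (theta + theta^T)) ->
  beta <= 2 * (bl * kp ^+ 2 - L1 * kp - (kp * L2 + kd * L1) / 2) ->
  beta <= 2 * (bl * kd ^+ 2 - kp - kd * L2 - (kp * L2 + kd * L1) / 2) ->
  mxle (Pmx n bl kp kd *m Amx kp kd a b theta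
            + (Amx kp kd a b theta)^T *m Pmx n bl kp kd)
           (- (beta *: (1%:M : 'M[R]_(n + n)))).
Proof.
move=> h1 h2 hb hp hd ha hbb ht be1 be2 x.
rewrite /mxle /psd in ht *; move: x; move=> x.
rewrite qformD !qformN qformZ qform1 qformD.
rewrite -(vsubmxK x); set u := usubmx x; set v := dsubmx x.
rewrite !qformE -!mulmxA dotTr !Amx_col !Pmx_col !dot_col.
rewrite !(dotDl, dotDr, dotBl, dotBr, dotNl, dotNr, dotZl, dotZr).
rewrite ?[dot (_ *m _) _]dotC (dotC v u).
have hw := ht (kp *: u + kd *: v).
rewrite qformD qformN !qformZ qformD qformT qform1 qformE in hw.
rewrite !(mulmxDr, dotDl, dotDr, dotZl, dotZr, mulmxBr, dotBl, dotBr) -!scalemxAr !(dotZl, dotZr) (dotC v u) in hw.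
have F1 := opnorm_dot h1 ha u u.
have F2 := opnorm_dot h2 hbb u v.
have F3 := opnorm_dot h1 ha v u.
have F4 := opnorm_dot h2 hbb v v.
have G1 := ler_wpM2l (ltW hp) F1.
have G2 := ler_wpM2l (ltW hp) F2.
have G3 := ler_wpM2l (ltW hd) F3.
have G4 := ler_wpM2l (ltW hd) F4.
have hU := dot_ge0 u. have hV := dot_ge0 v.
have H1 : 0 <= (2 * (bl * kp ^+ 2 - L1 * kp - (kp * L2 + kd * L1) / 2) - beta) * dot u u.
  apply: mulr_ge0 => //; lra.
have H2 : 0 <= (2 * (bl * kd ^+ 2 - kp - kd * L2 - (kp * L2 + kd * L1) / 2) - beta) * dot v v.
  apply: mulr_ge0 => //; lra.
lra.
Qed.

Unset Implicit Arguments. Set Strict Implicit.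

Theorem proposition4p3 (R : realType) (L1 L2 bl kp kd : R) :
  0 < L1 -> 0 < L2 -> 0 < bl -> 0 < kp -> 0 < kd ->
  kbar L1 L2 bl kp kd < kp ^+ 2 ->
  kp / bl + kbar L1 L2 bl kp kd < kd ^+ 2 ->
  (forall n : nat, (1 <= n)%N -> posdef (Pmx n bl kp kd)) /\
  exists beta : R, 0 < beta /\
    forall (n : nat) (a b theta : 'M[R]_n), (1 <= n)%N ->
      opnorm a <= L1 -> opnorm b <= L2 ->
      mxle (bl *: (1%:M : 'M[R]_n)) (2^-1 *: (theta + theta^T)) ->
      mxle (Pmx n bl kp kd *m Amx kp kd a b theta
            + (Amx kp kd a b theta)^T *m Pmx n bl kp kd)
           (- (beta *: (1%:M : 'M[R]_(n + n)))).
Proof.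
move=> h1 h2 hb hp hd hk1 hk2.
have K0 : 0 < kbar L1 L2 bl kp kd.
  by rewrite /kbar divr_gt0 // mulr_gt0 // addr_gt0.
split.
  move=> n _; apply: part1 => //; lra.
set K := kbar L1 L2 bl kp kd in hk1 hk2 K0.
have hK : K * bl = (L1 + L2) * (kp + kd) by rewrite /K /kbar divfK // gt_eqF.
have hP : kp / bl * bl = kp by rewrite divfK // gt_eqF.
have k1 : K * bl < kp ^+ 2 * bl by rewrite ltr_pM2r.
have k2 : (kp / bl + K) * bl < kd ^+ 2 * bl by rewrite ltr_pM2r.
rewrite mulrDl hP hK in k2; rewrite hK in k1.
have m1 := mulr_gt0 h1 hp. have m2 := mulr_gt0 h1 hd.
have m3 := mulr_gt0 h2 hp. have m4 := mulr_gt0 h2 hd.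
set e1 := bl * kp ^+ 2 - L1 * kp - (kp * L2 + kd * L1) / 2.
set e2 := bl * kd ^+ 2 - kp - kd * L2 - (kp * L2 + kd * L1) / 2.
have e10 : 0 < e1 by rewrite /e1; lra.
have e20 : 0 < e2 by rewrite /e2; lra.
exists (2 * Num.min e1 e2); split.
  by rewrite mulr_gt0 // lt_min e10 e20.
move=> n a b theta _ ha hbb ht.
apply: (@part2 R L1 L2) => //; rewrite -/e1 -/e2.
  by apply: ler_wpM2l => //; rewrite ge_min lexx.
by apply: ler_wpM2l => //; rewrite ge_min lexx orbT.
Qed.
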